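(* Let $(S,K,I)$ be a homogeneous split graph and $\Phi=\Phi(S)$. Then: (1) for distinct $u,v\in I$, $\sigma_{uv}(S)=0$ if and only if $u$ and $v$ are twins in $S$; (2) $\sigma_{uv}(S)$ is a perfect square for every pair of distinct $u,v\in I$; (3) $\deg(S)\ge1$; in particular, if $d$ denotes the common degree in $S$ of the vertices of $I$, then $d\notin\{0,|K|\}$; (4) $\Phi$ has no induced subgraph isomorphic to $K_2\,\dot\cup\,K_1$; (5) $\operatorname{diam}(\Phi)\le 2$ (in particular $\Phi$ is connected); (6) $\Phi$ contains no induced cycle of length $5$ or more.
   Context: All graphs are finite and simple. A split graph is a graph $S$ whose vertex set is a disjoint union $V(S)=K\,\dot\cup\,I$ with $K$ a clique and $I$ an independent set; $(K,I)$ is called a bipartition of $S$, and $(S,K,I)$ denotes $S$ together with this fixed bipartition. For a split graph $(S,K,I)$ and distinct $u,v\in I$, $\sigma_{uv}(S)$ is the number of induced subgraphs of $S$ isomorphic to $P_4$ containing both $u$ and $v$. The factor graph $\Phi(S)$ is the loopless multigraph with vertex set $I$ having exactly $\sigma_{uv}(S)$ parallel edges between $u$ and $v$. Graph notions (connected, complete, clique, diameter, induced subgraph, etc.) applied to $\Phi(S)$ refer to its underlying simple graph, in which $u\sim v$ iff $\sigma_{uv}(S)\ge1$. $\deg(S)$ denotes the number of induced subgraphs of $S$ isomorphic to $P_4$ (equivalently the number of edges of $\Phi(S)$ counted with multiplicity). Two vertices $u,v$ of a graph $G$ are twins if $N_G(u)\setminus\{v\}=N_G(v)\setminus\{u\}$.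 A vertex $w$ of $(S,K,I)$ is swing if $N_S(w)=K\setminus\{w\}$. $(S,K,I)$ is balanced if $|K|=\omega(S)$ and $|I|=\alpha(S)$; it is known that $S$ is balanced iff it has no swing vertex. $(S,K,I)$ is homogeneous if it is balanced and all vertices of $I$ have the same degree in $S$. *)

(* Defs.v *)
(* Finite simple graphs: a symmetric irreflexive relation e on a finType T. *)
From mathcomp Require Import all_boot.
Set Implicit Arguments. Unset Strict Implicit. Unset Printing Implicit Defensive.

Section SplitGraphs.
Variables (T : finType) (e : rel T).

Definition is_clique (A : {set T}) : bool :=
  [forall x in A, forall y in A, (x != y) ==> e x y].
Definition is_stable (A : {set T}) : bool :=
  [forall x in A, forall y in A, (x != y) ==> ~~ e x y].

Definition omega : nat := \max_(A : {set T} | is_clique A) #|A|.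
Definition alpha : nat := \max_(A : {set T} | is_stable A) #|A|.

Definition split_bipartition (K I : {set T}) : bool :=
  [&& K :&: I == set0, K :|: I == setT, is_clique K & is_stable I].

Definition nbhd (v : T) : {set T} := [set w | e v w].
Definition vdeg (v : T) : nat := #|nbhd v|.

Definition balanced (K I : {set T}) : bool :=
  (#|K| == omega) && (#|I| == alpha).

Definition homogeneous (K I : {set T}) : bool :=
  balanced K I && [forall u in I, forall v in I, vdeg u == vdeg v].

Definition is_P4 (X : {set T}) : bool :=
  [exists a, exists b, exists c, exists d,
    (X == [set a; b; c; d]) && uniq [:: a; b; c; d] &&
    e a b && e b c && e c d && ~~ e a c && ~~ e a d && ~~ e b d].

Definition sigma (u v : T) : nat :=
  #|[set X : {set T} | is_P4 X && (u \in X) && (v \in X)]|.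

Definition P4deg : nat := #|[set X : {set T} | is_P4 X]|.

Definition twins (u v : T) : bool := nbhd u :\ v == nbhd v :\ u.

(* adjacency in the underlying simple graph of the factor graph Phi(S) on I *)
Definition phi_adj (I : {set T}) (u v : T) : bool :=
  [&& u \in I, v \in I, u != v & 0 < sigma u v].

End SplitGraphs.

(* Main.v *)
Require Import Defs.
From mathcomp Require Import all_boot.
Set Implicit Arguments. Unset Strict Implicit. Unset Printing Implicit Defensive.

Section Aux.
Variables (T : finType) (e : rel T) (K I : {set T}).
Hypotheses (esym : symmetric e) (eirr : irreflexive e)
  (hsp : split_bipartition e K I).

Lemma KI0 : K :&: I = set0.
Proof. by case/and4P: hsp => /eqP. Qed.
Lemma KIT : K :|: I = setT.
Proof. by case/and4P: hsp => _ /eqP. Qed.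
Lemma cliqK : is_clique e K.
Proof. by case/and4P: hsp. Qed.
Lemma stabI : is_stable e I.
Proof. by case/and4P: hsp. Qed.

Lemma notKI x : x \in I -> x \notin K.
Proof.
move=> xI; apply/negP => xK.
have : x \in K :&: I by rewrite inE xK xI.
by rewrite KI0 inE.
Qed.

Lemma KorI x : (x \in K) || (x \in I).
Proof. have : x \in K :|: I by rewrite KIT inE. by rewrite inE. Qed.

Lemma neqIK a b : a \in I -> b \in K -> a != b.
Proof. move=> aI bK; apply/eqP => eab; move: (notKI aI); by rewrite eab bK. Qed.

Lemma stab u v : u \in I -> v \in I -> ~~ e u v.
Proof.
move=> uI vI; case: (eqVneq u v) => [->|neq]; first by rewrite eirr.
move: stabI => /forall_inP /(_ u uI) /forall_inP /(_ v vI) /implyP; exact.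
Qed.

Lemma cliq u v : u \in K -> v \in K -> u != v -> e u v.
Proof.
move=> uK vK; move: cliqK => /forall_inP /(_ u uK) /forall_inP /(_ v vK) /implyP; exact.
Qed.

Lemma nbK u x : u \in I -> e u x -> x \in K.
Proof.
move=> uI ux; case/orP: (KorI x) => // xI.
by move: (stab uI xI); rewrite ux.
Qed.

Lemma sigma_card u v : u \in I -> v \in I -> u != v ->
  sigma e u v = #|nbhd e u :\: nbhd e v| * #|nbhd e v :\: nbhd e u|.
Proof.
move=> uI vI nuv.
set A := nbhd e u :\: nbhd e v; set B := nbhd e v :\: nbhd e u.
have Ain x : x \in A = ~~ e v x && e u x by rewrite !inE.
have Bin x : x \in B = ~~ e u x && e v x by rewrite !inE.
pose f := fun p : T * T => [set u; p.1; p.2; v].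
have finj : {in setX A B &, injective f}.
  move=> [x y] [x' y'] /setXP [xA yB] /setXP [x'A y'B] /= eqf.
  move: xA yB x'A y'B; rewrite !Ain !Bin.
  move=> /andP[nvx ux] /andP[nuy vy] /andP[nvx' ux'] /andP[nuy' vy'].
  have : x \in f (x', y') by rewrite -eqf !inE eqxx !orbT.
  have : y \in f (x', y') by rewrite -eqf !inE eqxx !orbT.
  rewrite !inE /=.
  rewrite -!orbA. case/or4P => /eqP Ey.
  - by move: (stab vI uI); rewrite -Ey vy.
  - by move: nuy; rewrite Ey ux'.
  - case/or4P => /eqP Ex.
    + by move: ux; rewrite Ex eirr.
    + by rewrite Ex Ey.
    + by move: nvx; rewrite Ex vy'.
    + by move: (stab uI vI); rewrite -Ex ux.
  - by move: vy; rewrite Ey eirr.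
rewrite /sigma -cardsX -(card_in_imset finj).
suff -> : [set X | is_P4 e X && (u \in X) & v \in X] = f @: setX A B by [].
apply/setP => X; rewrite inE; apply/idP/idP.
- case/andP => [/andP [P4 uX] vX].
  case/existsP: P4 => a /existsP [b /existsP [c /existsP [d H]]].
  move: H => /andP[/andP[/andP[/andP[/andP[/andP[/andP[/eqP XE un] ab] bc] cd] nac] nad] nbd].
  have bK : b \in K.
    case/orP: (KorI b) => // bI.
    have aK : a \in K by case/orP: (KorI a) => // aI; move: (stab aI bI); rewrite ab.
    have cK : c \in K by case/orP: (KorI c) => // cI; move: (stab bI cI); rewrite bc.
    move: un; rewrite /= !inE !negb_or => /and4P[/and3P[_ nac' _] _ _ _].
    by move: nac; rewrite (cliq aK cK nac').
  have cK : c \in K.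
    case/orP: (KorI c) => // cI.
    have dK : d \in K by case/orP: (KorI d) => // dI; move: (stab cI dI); rewrite cd.
    move: un; rewrite /= !inE !negb_or => /and4P[_ /andP[_ nbd'] _ _].
    by move: nbd; rewrite (cliq bK dK nbd').
  have ad : forall w, w \in I -> w \in X -> (w == a) || (w == d).
    move=> w wI; rewrite XE !inE -!orbA; case/or4P => /eqP Ew; rewrite Ew ?eqxx ?orbT //.
    - by move: (notKI wI); rewrite Ew bK.
    - by move: (notKI wI); rewrite Ew cK.
  apply/imsetP.
  case/orP: (ad u uI uX) => /eqP Eu; case/orP: (ad v vI vX) => /eqP Ev.
  + by move: nuv; rewrite Eu Ev eqxx.
  + exists (b, c); last by rewrite /f /= XE Eu Ev.
    by apply/setXP; rewrite Ain Bin Eu Ev (esym d c) (esym d b) nac cd nbd ab.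
  + exists (c, b).
      by apply/setXP; rewrite Ain Bin Eu Ev (esym d c) (esym d b) nac cd nbd ab.
    rewrite /f /= XE Eu Ev; apply/setP => z; rewrite !inE.
    by case: (z == a); case: (z == b); case: (z == c); case: (z == d).
  + by move: nuv; rewrite Eu Ev eqxx.
- case/imsetP => [[x y]] /setXP [xA yB] -> /=.
  move: xA yB; rewrite Ain Bin => /andP[nvx ux] /andP[nuy vy].
  have xK := nbK uI ux; have yK := nbK vI vy.
  have nxy : x != y by apply/eqP => Exy; move: nvx; rewrite Exy vy.
  rewrite !inE !eqxx !orbT ?andbT ?andTb.
  apply/existsP; exists u; apply/existsP; exists x; apply/existsP; exists y;
    apply/existsP; exists v.
  rewrite eqxx /= !inE !negb_or (neqIK uI xK) (neqIK uI yK) nuv nxy.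
  rewrite eq_sym (neqIK vI xK) eq_sym (neqIK vI yK) ux (cliq xK yK nxy).
  by rewrite (esym y) vy nuy (stab uI vI) (esym x) nvx.
Qed.


Lemma sigma_pos u v : u \in I -> v \in I -> u != v -> vdeg e u = vdeg e v ->
  (0 < sigma e u v) = (nbhd e u != nbhd e v).
Proof.
move=> uI vI nuv duv.
have eAB : #|nbhd e u :\: nbhd e v| = #|nbhd e v :\: nbhd e u|.
  move: duv; rewrite /vdeg -(cardsID (nbhd e v) (nbhd e u)).
  rewrite -(cardsID (nbhd e u) (nbhd e v)) setIC; apply: addnI.
rewrite (sigma_card uI vI nuv) -eAB muln_gt0 andbb card_gt0 setD_eq0.
by rewrite eqEcard -/(vdeg e u) -/(vdeg e v) duv leqnn andbT.
Qed.

Lemma sigma_sq u v : u \in I -> v \in I -> u != v -> vdeg e u = vdeg e v ->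
  exists k, sigma e u v = k ^ 2.
Proof.
move=> uI vI nuv duv.
have eAB : #|nbhd e u :\: nbhd e v| = #|nbhd e v :\: nbhd e u|.
  move: duv; rewrite /vdeg -(cardsID (nbhd e v) (nbhd e u)).
  rewrite -(cardsID (nbhd e u) (nbhd e v)) setIC; apply: addnI.
by exists #|nbhd e u :\: nbhd e v|; rewrite (sigma_card uI vI nuv) -eAB.
Qed.

Lemma twinsE u v : u \in I -> v \in I -> twins e u v = (nbhd e u == nbhd e v).
Proof.
move=> uI vI.
have h : forall a b, a \in I -> b \in I -> nbhd e a :\ b = nbhd e a.
  move=> a b aI bI; apply/setP => x; rewrite !inE.
  case: eqP => [->|]; by rewrite ?(negbTE (stab aI bI)).
by rewrite /twins h // h.
Qed.

Lemma phi_adjE u v : u \in I -> v \in I -> u != v -> vdeg e u = vdeg e v ->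
  phi_adj e I u v = (nbhd e u != nbhd e v).
Proof. by move=> uI vI nuv duv; rewrite /phi_adj uI vI nuv sigma_pos. Qed.

Hypothesis hbal : balanced e K I.

Lemma lem1 u : u \in I -> exists2 k, k \in K & ~~ e u k.
Proof.
move=> uI; case: (boolP [exists k in K, ~~ e u k]) => [/exists_inP [k kK nuk]|/exists_inPn H].
  by exists k.
have cl : is_clique e (u |: K).
  apply/forall_inP => x; rewrite in_setU1 => /orP [/eqP ->|xK];
    apply/forall_inP => y; rewrite in_setU1 => /orP [/eqP ->|yK]; apply/implyP => neq.
  - by rewrite eqxx in neq.
  - by move: (H y yK); rewrite negbK.
  - by rewrite esym; move: (H x xK); rewrite negbK.
  - exact: cliq.
have : #|u |: K| <= omega e := @leq_bigmax_cond _ _ (fun A : {set T} => #|A|) _ cl.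
case/andP: hbal => /eqP <- _.
by rewrite cardsU1 (notKI uI) ltnn.
Qed.

Lemma lem2 k : k \in K -> exists2 w, w \in I & e w k.
Proof.
move=> kK; case: (boolP [exists w in I, e w k]) => [/exists_inP [w wI wk]|/exists_inPn H].
  by exists w.
have kI : k \notin I by apply/negP => kI; move: (notKI kI); rewrite kK.
have st : is_stable e (k |: I).
  apply/forall_inP => x; rewrite in_setU1 => /orP [/eqP ->|xI];
    apply/forall_inP => y; rewrite in_setU1 => /orP [/eqP ->|yI]; apply/implyP => neq.
  - by rewrite eqxx in neq.
  - by rewrite esym; exact: H.
  - exact: H.
  - exact: stab.
have : #|_ |: _| <= alpha e := @leq_bigmax_cond _ _ (fun A : {set T} => #|A|) _ st.
case/andP: hbal => _ /eqP <-.
by rewrite cardsU1 kI ltnn.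
Qed.

Lemma lem3 u : u \in I -> exists2 w, w \in I & nbhd e u != nbhd e w.
Proof.
move=> uI; have [k kK nuk] := lem1 uI; have [w wI wk] := lem2 kK.
exists w => //; apply/eqP => E; move: nuk.
have : k \in nbhd e w by rewrite inE.
by rewrite -E inE => ->.
Qed.

Lemma Inonempty : 0 < #|T| -> exists u, u \in I.
Proof.
move/card_gt0P => [t _].
have st : is_stable e [set t].
  apply/forall_inP => x; rewrite inE => /eqP ->; apply/forall_inP => y; rewrite inE => /eqP ->.
  by rewrite eqxx.
have : #|[set t]| <= alpha e := @leq_bigmax_cond _ _ (fun A : {set T} => #|A|) _ st.
case/andP: hbal => _ /eqP <-; rewrite cards1 => /card_gt0P; exact.
Qed.

End Aux.

Theorem theorem3p2 (T : finType) (e : rel T) (K I : {set T}) :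
  symmetric e -> irreflexive e -> 0 < #|T| ->
  split_bipartition e K I -> homogeneous e K I ->
  (* (1) *)
  (forall u v, u \in I -> v \in I -> u != v -> (sigma e u v = 0 <-> twins e u v)) /\
  (* (2) *)
  (forall u v, u \in I -> v \in I -> u != v -> exists k, sigma e u v = k ^ 2) /\
  (* (3) *)
  (1 <= P4deg e /\
   forall d, (forall v, v \in I -> vdeg e v = d) -> d <> 0 /\ d <> #|K|) /\
  (* (4) no induced K2 + K1 in Phi *)
  (forall x y z, x \in I -> y \in I -> z \in I ->
     x != z -> y != z ->
     ~ [/\ phi_adj e I x y, ~~ phi_adj e I x z & ~~ phi_adj e I y z]) /\
  (* (5) diam(Phi) <= 2 *)
  (forall u v, u \in I -> v \in I -> u != v ->
     phi_adj e I u v \/ exists2 w, phi_adj e I u w & phi_adj e I w v) /\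
  (* (6) no induced cycle of length >= 5 in Phi *)
  (forall n (c : 'I_n -> T), 5 <= n -> injective c -> (forall i, c i \in I) ->
     ~ (forall i j : 'I_n,
          phi_adj e I (c i) (c j) = (i.+1 %% n == j) || (j.+1 %% n == i))).
Proof.
move=> esym eirr hT hsp hhom.
have hbal : balanced e K I by case/andP: hhom.
have hdeg : forall u v, u \in I -> v \in I -> vdeg e u = vdeg e v.
  move=> u v uI vI; case/andP: hhom => _ /forall_inP /(_ u uI) /forall_inP /(_ v vI) /eqP; exact.
have adjE : forall u v, u \in I -> v \in I -> u != v ->
    phi_adj e I u v = (nbhd e u != nbhd e v).
  by move=> u v uI vI nuv; apply: (phi_adjE esym eirr hsp uI vI nuv (hdeg u v uI vI)).
have spos : forall u v, u \in I -> v \in I -> u != v ->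
    (0 < sigma e u v) = (nbhd e u != nbhd e v).
  by move=> u v uI vI nuv; apply: (sigma_pos esym eirr hsp uI vI nuv (hdeg u v uI vI)).
have [u0 u0I] := Inonempty hbal hT.
split.
  move=> u v uI vI nuv; rewrite (twinsE eirr hsp uI vI); split => [H|/eqP E].
    by apply/negPn; rewrite -(spos u v uI vI nuv) H.
  have := spos u v uI vI nuv; rewrite E eqxx lt0n => /negbT; rewrite negbK => /eqP; exact.
split.
  move=> u v uI vI nuv; exact: (sigma_sq esym eirr hsp uI vI nuv (hdeg u v uI vI)).
split.
  split.
    have [w wI nw] := lem3 esym eirr hsp hbal u0I.
    have nuw : u0 != w by apply/eqP => E; move: nw; rewrite E eqxx.
    have := spos u0 w u0I wI nuw; rewrite nw => /leq_trans; apply.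
    apply: subset_leq_card; apply/subsetP => X; rewrite !inE => /andP[/andP[-> _] _] //.
  move=> d Hd; have [k kK nuk] := lem1 esym hsp hbal u0I.
  split.
    move=> d0; have [w wI wk] := lem2 esym eirr hsp hbal kK.
    have : k \in nbhd e w by rewrite inE.
    have := Hd w wI; rewrite d0 /vdeg => /eqP; rewrite cards_eq0 => /eqP ->.
    by rewrite inE.
  move=> dK.
  have sub : nbhd e u0 \subset K by apply/subsetP => x; rewrite inE; exact: (nbK eirr hsp).
  have : nbhd e u0 == K by rewrite eqEcard sub -dK -(Hd u0 u0I) leqnn.
  move/eqP => E; move: nuk; have : k \in nbhd e u0 by rewrite E.
  by rewrite inE => ->.
split.
  move=> x y z xI yI zI nxz nyz [axy naxz nayz].
  have nxy : x != y by case/and4P: axy.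
  move: axy naxz nayz; rewrite !adjE // !negbK => /eqP nxy' /eqP E1 /eqP E2.
  by apply: nxy'; rewrite E1 E2.
split.
  move=> u v uI vI nuv; case: (boolP (nbhd e u == nbhd e v)) => E; last by left; rewrite adjE.
  right; have [w wI nw] := lem3 esym eirr hsp hbal uI.
  have nuw : u != w by apply/eqP => E'; move: nw; rewrite E' eqxx.
  have nwv : w != v by apply/eqP => E'; move: nw; rewrite E' (eqP E) eqxx.
  exists w; rewrite adjE //; last by rewrite eq_sym -(eqP E).
move=> n c n5 cinj cI H.
have l0 : 0 < n by apply: leq_trans n5.
have l2 : 2 < n by apply: leq_trans n5.
have l3 : 3 < n by apply: leq_trans n5.
pose i0 := Ordinal l0; pose i2 := Ordinal l2; pose i3 := Ordinal l3.
have H02 := H i0 i2; have H03 := H i0 i3; have H23 := H i2 i3.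
rewrite /= !modn_small // in H02 H03 H23; last by apply: leq_trans n5.
have n02 : c i0 != c i2 by rewrite (inj_eq cinj).
have n03 : c i0 != c i3 by rewrite (inj_eq cinj).
have n23 : c i2 != c i3 by rewrite (inj_eq cinj).
move: H02 H03 H23; rewrite !adjE // => /negbFE /eqP E02 /negbFE /eqP E03.
by rewrite -E02 E03 eqxx.
Qed.
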